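(* Let $\mathcal{H}$ be a complex Hilbert space of $\mathbb{C}^n$-valued functions. Let $D$ be a selfadjoint operator on $\mathcal{H}$ with domain $\mathcal{D}_0$. Let $W_L,W_R$ be bounded selfadjoint operators on $\mathcal{H}$ such that: - $W_LW_R=W_RW_L$; - $W_L^{-1}$ and $W_R^{-1}$ exist and are bounded; - $W_RW_L^{-1}$ is selfadjoint; - $W_RW_L^{-1}\ge c\,\mathrm{id}$ for some $c>0$. Let $M=W_L\,D\,W_R$ with domain $\mathcal{D}_R:=W_R^{-1}\mathcal{D}_0$. Assume that complex conjugation $(C\Psi)(x)=\overline{\Psi(x)}$ satisfies $C\mathcal{D}_R=\mathcal{D}_R$ and $CMC=-M$. Then $M$ is a closed operator on $\mathcal{H}$. *)

(* Defs.v *)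
From HB Require Import structures.
From mathcomp Require Import all_boot all_order all_algebra.
From mathcomp Require Import reals.
From mathcomp Require Import complex.
Set Implicit Arguments. Unset Strict Implicit. Unset Printing Implicit Defensive.
Import Order.TTheory GRing.Theory Num.Theory.
Local Open Scope ring_scope.

Section Hilbert.
Variable R : realType.
Variable H : lmodType R[i].
Variable ip : H -> H -> R[i].

Definition is_inner_product : Prop :=
  [/\ forall x y, ip x y = conjc (ip y x),
      forall (a : R[i]) x y z, ip (a *: x + y) z = a * ip x z + ip y z,
      forall x, 0 <= ip x x
    & forall x, ip x x = 0 -> x = 0].

Definition hnorm (x : H) : R := Num.sqrt (complex.Re (ip x x)).

Definition hconv (u : nat -> H) (l : H) : Prop :=
  forall e : R, 0 < e -> exists N, forall k, (N <= k)%N -> hnorm (u k - l) < e.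

Definition hcauchy (u : nat -> H) : Prop :=
  forall e : R, 0 < e -> exists N, forall k m, (N <= k)%N -> (N <= m)%N ->
    hnorm (u k - u m) < e.

Definition is_hilbert : Prop :=
  is_inner_product /\ (forall u, hcauchy u -> exists l, hconv u l).

Definition is_linear_op (W : H -> H) : Prop :=
  forall (a : R[i]) x y, W (a *: x + y) = a *: W x + W y.

Definition bounded_op (W : H -> H) : Prop :=
  is_linear_op W /\ exists K : R, forall x, hnorm (W x) <= K * hnorm x.

Definition bounded_selfadjoint (W : H -> H) : Prop :=
  bounded_op W /\ forall x y, ip (W x) y = ip x (W y).

Definition bounded_inverse (W Winv : H -> H) : Prop :=
  bounded_op Winv /\ (forall x, W (Winv x) = x) /\ (forall x, Winv (W x) = x).

Definition op_ge_scalar (A : H -> H) (c : R) : Prop :=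
  forall x, (c%:C)%C * ip x x <= ip (A x) x.

(* unbounded operators: a domain (a predicate on H) and an action on it *)
Definition is_subspace (dom : H -> Prop) : Prop :=
  dom 0 /\ forall (a : R[i]) x y, dom x -> dom y -> dom (a *: x + y).

Definition dense (dom : H -> Prop) : Prop :=
  forall x (e : R), 0 < e -> exists y, dom y /\ hnorm (x - y) < e.

Definition linear_on (dom : H -> Prop) (T : H -> H) : Prop :=
  forall (a : R[i]) x y, dom x -> dom y -> T (a *: x + y) = a *: T x + T y.

Definition adjoint_dom (dom : H -> Prop) (T : H -> H) (y : H) : Prop :=
  exists z, forall x, dom x -> ip (T x) y = ip x z.

(* (dom, T) is selfadjoint: densely defined, linear, symmetric, and the
   domain of its adjoint equals dom (so T^* = T) *)
Definition selfadjoint (dom : H -> Prop) (T : H -> H) : Prop :=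
  [/\ is_subspace dom, dense dom, linear_on dom T,
      (forall x y, dom x -> dom y -> ip (T x) y = ip x (T y))
    & (forall y, adjoint_dom dom T y <-> dom y)].

Definition closed_op (dom : H -> Prop) (T : H -> H) : Prop :=
  forall (u : nat -> H) x y, (forall k, dom (u k)) ->
    hconv u x -> hconv (fun k => T (u k)) y -> dom x /\ T x = y.

End Hilbert.

(* Main.v *)
Require Import Defs.
From HB Require Import structures.
From mathcomp Require Import all_boot all_order all_algebra.
From mathcomp Require Import reals.
From mathcomp Require Import complex.
From mathcomp Require Import ring lra.
Import Order.TTheory GRing.Theory Num.Theory.
Local Open Scope ring_scope.

Section Aux.
Variable R : realType.
Variable H : lmodType R[i].
Variable ip : H -> H -> R[i].
Hypothesis hip : is_inner_product ip.
Local Open Scope complex_scope.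
Local Open Scope ring_scope.

Lemma ge0_realC (z : R[i]) : 0 <= z -> z = (complex.Re z)%:C.
Proof. by case: z => a b /ger0_Im /= ->. Qed.

Lemma ge0_conj (z : R[i]) : 0 <= z -> (conjc z) = z.
Proof. by move/ge0_realC => ->; rewrite conjc_real. Qed.

Lemma ipBl x y t w : ip (x - t *: y) w = ip x w - t * ip y w.
Proof.
case: hip => _ hl _ _.
by rewrite addrC -scaleNr hl mulNr addrC.
Qed.

Lemma ipBr x y t w : ip w (x - t *: y) = ip w x - (conjc t) * ip w y.
Proof.
case: hip => hc _ _ _.
by rewrite hc ipBl rmorphB rmorphM /= -!hc.
Qed.

Lemma ip0l w : ip 0 w = 0.
Proof.
case: hip => _ hl _ _.
have := hl 1 0 0 w; rewrite scale1r addr0 mul1r => h.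
by apply: (addrI (ip 0 w)); rewrite addr0 -h.
Qed.

Lemma ip0r w : ip w 0 = 0.
Proof. by case: hip => hc _ _ _; rewrite hc ip0l conjc0. Qed.

Lemma ipNN x : ip (- x) (- x) = ip x x.
Proof.
have := ipBr 0 x 1 (-x); rewrite sub0r scale1r => ->.
have := ipBl 0 x 1 x; rewrite sub0r scale1r => ->.
by rewrite ip0r ip0l conjc1 !mul1r !sub0r opprK.
Qed.

Lemma hnorm_ge0 x : 0 <= hnorm ip x.
Proof. exact: sqrtr_ge0. Qed.

Lemma hnormN x : hnorm ip (- x) = hnorm ip x.
Proof. by rewrite /hnorm ipNN. Qed.

Lemma hnormB x y : hnorm ip (x - y) = hnorm ip (y - x).
Proof. by rewrite -hnormN opprB. Qed.

Lemma ip_self x : ip x x = ((hnorm ip x) ^+ 2)%:C.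
Proof.
case: hip => _ _ hp _.
rewrite /hnorm sqr_sqrtr; first exact: ge0_realC.
by rewrite -ler0c -ge0_realC.
Qed.

Lemma CS a b : `|ip a b| <= (hnorm ip a * hnorm ip b)%:C.
Proof.
case: hip => hc hl hp h0.
have [Bz|Bnz] := eqVneq (ip b b) 0.
  by rewrite (h0 _ Bz) ip0r normr0 ler0c mulr_ge0 // hnorm_ge0.
have Bpos : 0 < ip b b by rewrite lt_def Bnz hp.
set z := ip a b.
have key : z * (conjc z) <= ip a a * ip b b.
  have := hp (a - (z / ip b b) *: b).
  rewrite ipBl !ipBr rmorphM /= conjc_inv (@ge0_conj _ (hp b)).
  rewrite -/z [ip b a]hc -/z.
  have -> : ip a a - (conjc z) / ip b b * z - z / ip b b * ((conjc z) - (conjc z) / ip b b * ip b b)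
     = ip a a - z * (conjc z) / ip b b by field.
  by rewrite subr_ge0 ler_pdivrMr.
rewrite -sqr_normc ip_self [ip b b]ip_self -rmorphM -exprMn rmorphXn /= in key.
rewrite -(ler_pXn2r (n:=2)) // qualifE /= ?normr_ge0 // ler0c mulr_ge0 // hnorm_ge0.
all: done.
Qed.


Lemma ipBr1 x y w : ip w (x - y) = ip w x - ip w y.
Proof. by have := ipBr x y 1 w; rewrite scale1r conjc1 mul1r. Qed.

Lemma ipBl1 x y w : ip (x - y) w = ip x w - ip y w.
Proof. by have := ipBl x y 1 w; rewrite scale1r mul1r. Qed.

Lemma small_eq0 (w : R[i]) : (forall e : R, 0 < e -> `|w| < e%:C) -> w = 0.
Proof.
move=> h.
have hw := normr_ge0 w.
have E := @ge0_realC _ hw.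
have r0 : 0 <= complex.Re `|w| by rewrite -ler0c -E.
move: r0; rewrite le_eqVlt => /orP[/eqP r0|rpos].
  by apply/normr0_eq0; rewrite E -r0.
by have := h _ rpos; rewrite -E ltxx.
Qed.

Lemma lim_ip (u u' : nat -> H) l l' a b :
  hconv ip u l -> hconv ip u' l' -> (forall k, ip a (u k) = ip b (u' k)) ->
  ip a l = ip b l'.
Proof.
move=> cu cu' hk; apply/eqP; rewrite -subr_eq0; apply/eqP; apply: small_eq0 => e e0.
set K := hnorm ip a + hnorm ip b + 1.
have Kpos : 0 < K by rewrite /K ltr_pwDr // addr_ge0 // hnorm_ge0.
set e' := e / K.
have e'pos : 0 < e' by rewrite divr_gt0.
have [N1 hN1] := cu e' e'pos.
have [N2 hN2] := cu' e' e'pos.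
set k := maxn N1 N2.
have h1 := hN1 k (leq_maxl _ _).
have h2 := hN2 k (leq_maxr _ _).
have -> : ip a l - ip b l' = ip b (u' k - l') - ip a (u k - l)
  by rewrite !ipBr1 hk; ring.
apply: (le_lt_trans (ler_normB _ _)).
apply: (le_lt_trans (lerD (CS _ _) (CS _ _))).
rewrite -rmorphD ltcR.
have ha := hnorm_ge0 a. have hb := hnorm_ge0 b.
have t1 : hnorm ip b * hnorm ip (u' k - l') <= hnorm ip b * e'
  by rewrite ler_wpM2l // ltW.
have t2 : hnorm ip a * hnorm ip (u k - l) <= hnorm ip a * e'
  by rewrite ler_wpM2l // ltW.
have t3 : e' * K = e by rewrite /e' divfK // gt_eqF.
rewrite /K in t3.
nra.
Qed.

Lemma bounded_conv W u l : bounded_op ip W -> hconv ip u l ->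
  hconv ip (fun k => W (u k)) (W l).
Proof.
move=> [lin [K hK]] cu e e0.
set K' := `|K| + 1.
have K'pos : 0 < K' by rewrite /K' ltr_pwDr // normr_ge0.
have e'pos : 0 < e / K' by rewrite divr_gt0.
have [N hN] := cu _ e'pos.
exists N => k hk.
have -> : W (u k) - W l = W (u k - l).
  by have := lin (-1) l (u k); rewrite !scaleN1r (addrC (u k)) => ->; rewrite addrC.
have h1 := hN k hk.
have h0 := hnorm_ge0 (u k - l).
have h2 := hK (u k - l).
have h3 : K <= `|K| := ler_norm K.
have t3 : e / K' * K' = e by rewrite divfK // gt_eqF.
rewrite /K' in t3.
have t4 : K * hnorm ip (u k - l) <= `|K| * hnorm ip (u k - l) by rewrite ler_wpM2r.
have t5 : `|K| * hnorm ip (u k - l) <= `|K| * (e / K') by rewrite ler_wpM2l // ltW.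
rewrite mulrDr mulr1 in t3.
lra.
Qed.

Lemma selfadjoint_closed dom T : selfadjoint ip dom T -> closed_op ip dom T.
Proof.
case=> sub dn lin sym adj u x y du cu cTu.
have E : forall z, dom z -> ip (T z) x = ip z y.
  move=> z dz; apply: (lim_ip _ _ _ _ _ _ cu cTu) => k; exact: sym.
have dx : dom x by apply/adj; exists y.
split => //.
apply/eqP; rewrite -subr_eq0; apply/eqP.
set d := T x - y.
have orth : forall z, dom z -> ip z d = 0.
  move=> z dz; rewrite ipBr1 -sym // E // subrr //.
case: hip => _ _ _ h0; apply: h0.
apply: small_eq0 => e e0.
set K := hnorm ip d + 1.
have Kpos : 0 < K by rewrite /K ltr_pwDr // hnorm_ge0.
have e'pos : 0 < e / K by rewrite divr_gt0.
have [z [dz hz]] := dn d _ e'pos.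
have -> : ip d d = ip (d - z) d by rewrite (ipBl1 d z d) (orth _ dz) subr0.
apply: (le_lt_trans (CS _ _)); rewrite ltcR.
have h0 := hnorm_ge0 (d - z).
have h1 := hnorm_ge0 d.
have t3 : e / K * K = e by rewrite divfK // gt_eqF.
rewrite /K in t3.
nra.
Qed.

End Aux.

Theorem lemmaB1 (R : realType) (n : nat) (X : Type) (H : lmodType R[i])
  (ip : H -> H -> R[i])
  (ev : H -> X -> 'rV[R[i]]_n)
  (conjH : H -> H)
  (dom0 : H -> Prop) (D : H -> H)
  (WL WR WLinv WRinv : H -> H) (c : R) :
  (* H is a complex Hilbert space of C^n-valued functions on X *)
  is_hilbert ip ->
  (forall (a : R[i]) f g, ev (a *: f + g) = fun x => a *: ev f x + ev g x) ->
  injective ev ->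
  (* conjH is complex conjugation (C Psi)(x) = conj (Psi x) *)
  (forall f x, ev (conjH f) x = map_mx (@conjc R) (ev f x)) ->
  (* D selfadjoint with domain D_0 *)
  selfadjoint ip dom0 D ->
  (* W_L, W_R bounded selfadjoint *)
  bounded_selfadjoint ip WL -> bounded_selfadjoint ip WR ->
  (forall f, WL (WR f) = WR (WL f)) ->
  bounded_inverse ip WL WLinv -> bounded_inverse ip WR WRinv ->
  bounded_selfadjoint ip (fun f => WR (WLinv f)) ->
  0 < c -> op_ge_scalar ip (fun f => WR (WLinv f)) c ->
  (* M = W_L D W_R on D_R = W_R^{-1} D_0 *)
  let domR := fun f => dom0 (WR f) in
  let M := fun f => WL (D (WR f)) in
  (* C D_R = D_R *)
  (forall f, domR f -> domR (conjH f)) ->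
  (forall g, domR g -> exists f, domR f /\ conjH f = g) ->
  (* C M C = - M *)
  (forall f, domR f -> conjH (M (conjH f)) = - M f) ->
  closed_op ip domR M.
Proof.
move=> hH _ _ _ sD [bL sL] [bR sR] _ [bLi [LLi LiL]] _ _ _ _ domR M _ _ _.
move=> u x y du cu cMu.
case: hH => hip _.
have c1 := @bounded_conv _ _ _ _ _ _ bR cu.
have c2 := @bounded_conv _ _ _ _ _ _ bLi cMu.
have c3 : hconv ip (fun k => D (WR (u k))) (WLinv y).
  move=> e e0; case: (c2 e e0) => N hN; exists N => k hk.
  have := hN k hk; rewrite /M LiL; exact.
have [dx Dx] := @selfadjoint_closed _ _ _ hip _ _ sD _ _ _ du c1 c3.
split; first exact: dx.
rewrite /M Dx; exact: LLi.
Qed.
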